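(* Let $\ell\ge 1$, let $R$ be a path in $H_\ell$ and let $h\in\{1,\dots,\ell\}$. Then there are at most $2$ vertices $v_{h',j}$ with $|h'|=h$ that are turn vertices of $R$.
   Context: For an integer $\ell\ge 1$, $H_\ell$ is the graph with vertex set $V_\ell=\{v_{h,j} : h\in\{-\ell,\dots,\ell\},\ j\in\{1,\dots,2^{\ell-|h|}\}\}$ and with the following edges: (1) $v_{h,j}v_{h-1,2j-1}$ and $v_{h,j}v_{h-1,2j}$ for every $h\in\{1,\dots,\ell\}$ and $j\in\{1,\dots,2^{\ell-h}\}$; (2) $v_{h,j}v_{h+1,2j-1}$ and $v_{h,j}v_{h+1,2j}$ for every $h\in\{-\ell,\dots,-1\}$ and $j\in\{1,\dots,2^{\ell-|h|}\}$; (3) the edge $v_{\ell,1}v_{-\ell,1}$; (4) the edges $v_{0,2j-1}v_{0,2j}$ for every $j\in\{1,\dots,2^{\ell-1}\}$. For a path $R$ in $H_\ell$ and a vertex $v_{h,k}$ of $R$, let $\deg_R(v_{h,k})$ be its degree in $R$. The vertex $v_{h,k}$ is a turn vertex of $R$ if $h\neq 0$, $\deg_R(v_{h,k})=2$, and its two neighbours on $R$ are $v_{h',2k-1}$ and $v_{h',2k}$, where $h'=h-1$ if $h>0$ and $h'=h+1$ if $h<0$ (i.e., both path-neighbours are its two children in its tree). *)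

(* Defs.v *)
From mathcomp Require Import all_boot all_order all_algebra.
Set Implicit Arguments. Unset Strict Implicit. Unset Printing Implicit Defensive.
Import Order.TTheory GRing.Theory Num.Theory.

(* A vertex v_{h,j} of H_l is represented by the pair (h, j) : int * nat. *)
Definition vtx := (int * nat)%type.

Definition inV (l : nat) (v : vtx) : bool :=
  (absz v.1 <= l)%N && (1 <= v.2 <= 2 ^ (l - absz v.1))%N.

Definition edgeH (l : nat) (u w : vtx) : bool :=
  has (fun h : nat =>
     has (fun j : nat =>
        (u == ((Posz h), j)) &&
        ((w == ((Posz h - 1)%R, (j.*2).-1)) || (w == ((Posz h - 1)%R, j.*2))))
     (iota 1 (2 ^ (l - h))))
   (iota 1 l)
  ||
  has (fun h : nat =>
     has (fun j : nat =>
        (u == ((- Posz h)%R, j)) &&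
        ((w == ((- Posz h + 1)%R, (j.*2).-1)) || (w == ((- Posz h + 1)%R, j.*2))))
     (iota 1 (2 ^ (l - h))))
   (iota 1 l)
  ||
  ((u == ((Posz l), 1%N)) && (w == ((- Posz l)%R, 1%N)))
  ||
  has (fun j : nat => (u == (0%Z, (j.*2).-1)) && (w == (0%Z, j.*2)))
      (iota 1 (2 ^ (l - 1))).

Definition adjH (l : nat) (u w : vtx) : bool := edgeH l u w || edgeH l w u.

Definition pedges (R : seq vtx) : seq (vtx * vtx) := zip R (behead R).

Definition is_path (l : nat) (R : seq vtx) : bool :=
  [&& R != [::], uniq R, all (inV l) R &
      all (fun e => adjH l e.1 e.2) (pedges R)].

Definition path_nbrs (R : seq vtx) (v : vtx) : seq vtx :=
  [seq (if e.1 == v then e.2 else e.1) | e <- pedges R & (e.1 == v) || (e.2 == v)].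

Definition degR (R : seq vtx) (v : vtx) : nat := size (path_nbrs R v).

Definition child_level (h : int) : int := if (0 < h)%R then (h - 1)%R else (h + 1)%R.

Definition turn_vertex (R : seq vtx) (v : vtx) : bool :=
  [&& v \in R, v.1 != 0%Z, degR R v == 2%N &
      perm_eq (path_nbrs R v)
        [:: (child_level v.1, (v.2.*2).-1); (child_level v.1, v.2.*2)]].

(* Main.v *)
Require Import Defs.
From mathcomp Require Import all_boot all_order all_algebra zify.

Ltac alia := repeat match goal with
 | H : is_true (leq _ _) |- _ => revert H
 | H : (@eq nat _ _) |- _ => revert H
 | H : ~ (@eq nat _ _) |- _ => revert H
 | H : is_true (leq _ _ && leq _ _) |- _ => revert H
 end; repeat match goal with H : _ |- _ => clear H end; intros; lia.

Section Abs.
Variables (T : eqType) (x0 : T) (s : seq T) (ins top : pred T) (blk : T -> nat).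
Hypothesis Us : uniq s.
Hypothesis HB : forall k, k.+1 < size s -> ins (nth x0 s k) -> ins (nth x0 s k.+1) ->
  blk (nth x0 s k) = blk (nth x0 s k.+1).
Hypothesis HT1 : forall k, k.+1 < size s -> ins (nth x0 s k) -> ~~ ins (nth x0 s k.+1) -> top (nth x0 s k).
Hypothesis HT2 : forall k, k.+1 < size s -> ~~ ins (nth x0 s k) -> ins (nth x0 s k.+1) -> top (nth x0 s k.+1).
Hypothesis Htop : forall x, top x -> ins x.
Hypothesis H3 : forall x y z, top x -> top y -> top z -> blk x = blk y -> blk y = blk z ->
  [\/ x = y, y = z | x = z].

Definition Qi i := [/\ top (nth x0 s i), 0 < i, i.+1 < size s, ins (nth x0 s i.-1) & ins (nth x0 s i.+1)].

Lemma block_run a c : c < size s -> a <= c -> (forall q, a <= q <= c -> ins (nth x0 s q)) ->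
  blk (nth x0 s a) = blk (nth x0 s c).
Proof.
elim: c => [|c IH] csz ac Hq.
  by have -> : a = 0 by alia.
case: (ltngtP a c.+1) => [lac|gac|->//]; last alia.
rewrite (IH (ltnW csz)); [|alia|by move=> q Hq'; apply: Hq; alia].
apply: HB => //; apply: Hq; alia.
Qed.
Lemma key i j k : i < j -> j < k -> Qi i -> Qi j -> Qi k -> False.
Proof.
move=> ij jk [ti i0 isz ii1 ii2] [tj j0 jsz ij1 ij2] [tk k0 ksz ik1 ik2].
have insj : ins (nth x0 s j) by apply: Htop.
have [L [Lj tL HL]] : exists L, [/\ L < j, top (nth x0 s L) & forall q, L <= q <= j -> ins (nth x0 s q)].
  case: (boolP (has (fun p => ~~ ins (nth x0 s p)) (iota 0 j))) => [/hasP [p pin pout]|/hasPn Hn].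
    rewrite mem_iota in pin.
    have ex : exists p, (p < j) && ~~ ins (nth x0 s p) by exists p; rewrite pout andbT; alia.
    have ub : forall p, (p < j) && ~~ ins (nth x0 s p) -> p <= j by move=> p' /andP[? _]; alia.
    case: (ex_maxnP ex ub) => m /andP[mj mout] mmax.
    have mj' : m.+1 < j.
      case: (ltngtP m.+1 j) => [//|?|e]; first alia.
      by move: ij1 mout; rewrite -e /= => ->.
    have insm : ins (nth x0 s m.+1).
      apply: contraT => H; have := mmax m.+1; rewrite mj' H => /(_ isT); alia.
    exists m.+1; split => //.
      apply: HT2 => //; alia.
    move=> q Hq; case: (ltngtP q j) => [qj|?|->//]; last alia.
    apply: contraT => H; have := mmax q; rewrite qj H => /(_ isT); alia.
  exists i; split => //.
  move=> q Hq; case: (ltngtP q j) => [qj|?|->//]; last alia.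
  have := Hn q; rewrite mem_iota => /(_ ltac:(alia)); by rewrite negbK.
have [U [jU Usz tU HU]] : exists U, [/\ j < U, U < size s, top (nth x0 s U) & forall q, j <= q <= U -> ins (nth x0 s q)].
  case: (boolP (has (fun p => ~~ ins (nth x0 s p)) (iota j.+1 (size s - j.+1)))) => [/hasP [p pin pout]|/hasPn Hn].
    rewrite mem_iota in pin.
    have ex : exists p, [&& j < p, p < size s & ~~ ins (nth x0 s p)].
      by exists p; rewrite pout andbT; apply/andP; split; alia.
    case: (ex_minnP ex) => m /and3P[jm msz mout] mmin.
    case: m jm msz mout mmin => [|m] jm msz mout mmin; first alia.
    have jm' : j < m.
      case: (ltngtP j m) => [//|?|e]; first alia.
      by move: ij2 mout; rewrite -e /= => ->.
    have insm : ins (nth x0 s m).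
      apply: contraT => H.
      have : [&& j < m, m < size s & ~~ ins (nth x0 s m)] by rewrite jm' H andbT /=; alia.
      move/mmin; alia.
    exists m; split => //; first alia.
      apply: HT1 => //.
    move=> q Hq; case: (ltngtP j q) => [jq|?|<-//]; last alia.
    apply: contraT => H; have := mmin q; rewrite jq H andbT => /(_ ltac:(alia)); alia.
  exists k; split => //; first alia.
  move=> q Hq; case: (ltngtP j q) => [jq|?|<-//]; last alia.
  have := Hn q; rewrite mem_iota => /(_ ltac:(alia)); by rewrite negbK.
have js : j < size s by alia.
have Lj' : L <= j by alia.
have jU' : j <= U by alia.
have b1 := block_run L j js Lj' HL.
have b2 := block_run j U Usz jU' HU.
have Lsz : L < size s by alia.
case: (H3 _ _ _ tL tj tU b1 b2) => /eqP; rewrite nth_uniq //; move/eqP; alia.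
Qed.
Lemma key3 i j k : Qi i -> Qi j -> Qi k -> i <> j -> j <> k -> i <> k -> False.
Proof.
move=> Q1 Q2 Q3 nij njk nik.
have [ij|ji] : i < j \/ j < i by alia.
all: have [jk|kj] : j < k \/ k < j by alia.
all: have [ik|ki] : i < k \/ k < i by alia.
all: first [exact: (key _ _ _ ij jk) | exact: (key _ _ _ ik kj) | exact: (key _ _ _ ji ik)
  | exact: (key _ _ _ jk ki) | exact: (key _ _ _ ki ij) | exact: (key _ _ _ kj ji) | alia].
Qed.
End Abs.

Lemma three (T : eqType) (P : pred T) (s : seq T) : uniq s -> 2 < count P s ->
  exists x y z, [/\ x \in s, y \in s, z \in s, P x && P y && P z & [&& x != y, y != z & x != z]].
Proof.
move=> Us; rewrite -size_filter.
have Uf : uniq (filter P s) by apply: filter_uniq.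
have Hm : forall x, x \in filter P s -> (x \in s) && P x by move=> x; rewrite mem_filter andbC.
case E: (filter P s) Uf Hm => [|x [|y [|z f]]] //= Uf Hm _.
move: Uf; rewrite !inE !negb_or => /andP[/and3P[xy xz _] /andP[/andP[yz _] _]].
have /andP[xs Px] := Hm x (mem_head _ _).
have /andP[ys Py] : (y \in s) && P y by apply: Hm; rewrite !inE eqxx orbT.
have /andP[zs Pz] : (z \in s) && P z by apply: Hm; rewrite !inE eqxx !orbT.
exists x, y, z; split => //; first by rewrite Px Py Pz.
by rewrite xy yz xz.
Qed.


Lemma pn_cons2 (a b x : vtx) t : path_nbrs [:: a, b & t] x =
  if (a == x) || (b == x) then (if a == x then b else a) :: path_nbrs (b :: t) x
  else path_nbrs (b :: t) x.
Proof. by rewrite /path_nbrs /pedges /=; case: ifP. Qed.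

Lemma pn_notin s (x : vtx) : x \notin s -> path_nbrs s x = [::].
Proof.
elim: s => [|a [|b t] IH] //= Hx.
rewrite pn_cons2 IH.
  by move: Hx; rewrite !inE !negb_or => /andP[/negPf ha /andP[/negPf hb _]]; rewrite eq_sym ha eq_sym hb.
by move: Hx; rewrite inE negb_or => /andP[].
Qed.

Lemma pn_nth (s : seq vtx) d i : uniq s -> i < size s ->
  path_nbrs s (nth d s i) = (if i is i'.+1 then [:: nth d s i'] else [::]) ++
     (if i.+1 < size s then [:: nth d s i.+1] else [::]).
Proof.
elim: s i => [|a [|b t] IH] i //= Us isz.
  by case: i isz.
move: Us => /andP[anb Ubt].
have IH' := IH _ Ubt.
rewrite pn_cons2.
case: i isz => [|[|i]] isz /=.
- rewrite eqxx /= pn_notin //.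
- have ab : (a == b) = false by apply/negP => /eqP e; move: anb; rewrite e inE eqxx.
  rewrite ab eqxx orbT.
  have := IH' 0 isT; rewrite /= => ->; done.
- have xin : nth d t i \in t by apply: mem_nth.
  have ha : (a == nth d t i) = false.
    by apply/negP => /eqP e; move: anb; rewrite e inE xin orbT.
  have hb : (b == nth d t i) = false.
    by apply/negP => /eqP e; move: Ubt => /= /andP[]; rewrite e xin.
  rewrite ha hb /=.
  by have := IH' i.+1 isz; rewrite /= => ->.
Qed.


Definition insh (h : nat) (v : vtx) : bool := (absz v.1 <= h)%N.
Definition toph (h : nat) (v : vtx) : bool := absz v.1 == h.
Definition blkh (h : nat) (v : vtx) : nat := iter (h - absz v.1) uphalf v.2.

Lemma uphalf_dm j : 0 < j -> uphalf (j.*2).-1 = j.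
Proof. by case: j => // j _; rewrite doubleS /= half_double. Qed.

Lemma edge_prop l h (u w : vtx) : 0 < h -> edgeH l u w ->
  [/\ absz u.1 <= (absz w.1).+1, absz w.1 <= (absz u.1).+1 &
      (absz u.1 <= h -> absz w.1 <= h -> blkh h u = blkh h w)].
Proof.
move=> h0; rewrite /edgeH.
case/orP => [/orP [/orP [A|B]|C]|D].
- case/hasP: A => h1 h1in /hasP [j jin /andP [/eqP -> H]].
  rewrite mem_iota in h1in; rewrite mem_iota in jin.
  case: h1 h1in jin H => [|h1] h1in jin H; first by move: h1in.
  have e : (Posz h1.+1 - 1 = Posz h1)%R by lia.
  have j0 : 0 < j by case/andP: jin.
  case/orP: H => /eqP ->; rewrite e /=; (split; [lia|lia|]);
    move=> H1 H2; rewrite /blkh /= (_ : h - h1 = (h - h1.+1).+1); try lia;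
    rewrite iterSr ?uphalf_dm ?uphalf_double //.
- case/hasP: B => h1 h1in /hasP [j jin /andP [/eqP -> H]].
  rewrite mem_iota in h1in; rewrite mem_iota in jin.
  case: h1 h1in jin H => [|h1] h1in jin H; first by move: h1in.
  have e : (- Posz h1.+1 + 1 = - Posz h1)%R by lia.
  have j0 : 0 < j by case/andP: jin.
  case/orP: H => /eqP ->; rewrite e /= ?abszN /=; (split; [lia|lia|]);
    move=> H1 H2; rewrite /blkh /= ?abszN (_ : h - h1 = (h - h1.+1).+1); try lia;
    rewrite iterSr ?uphalf_dm ?uphalf_double //.
- case/andP: C => /eqP -> /eqP ->; rewrite /blkh /=; have -> : absz (- Posz l)%R = l by lia.
  split; [lia|lia|done].
- case/hasP: D => j jin /andP[/eqP -> /eqP ->] /=.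
  rewrite mem_iota in jin.
  have j0 : 0 < j by case/andP: jin.
  split => // _ _; rewrite /blkh /=.
  case: h h0 => // h _; rewrite subn0 !iterSr uphalf_dm ?uphalf_double //.
Qed.

Lemma adj_prop l h (u w : vtx) : 0 < h -> adjH l u w ->
  [/\ absz u.1 <= (absz w.1).+1, absz w.1 <= (absz u.1).+1 &
      (absz u.1 <= h -> absz w.1 <= h -> blkh h u = blkh h w)].
Proof.
move=> h0 /orP[E|E].
  exact: edge_prop E.
have [a b c] := edge_prop l h w u h0 E; split => // H1 H2; by rewrite c.
Qed.

Lemma all_pedges (P : pred (vtx * vtx)) (s : seq vtx) d k :
  all P (pedges s) -> k.+1 < size s -> P (nth d s k, nth d s k.+1).
Proof.
elim: s k => [|a t IH] k //.
case: t IH => [|b t] IH; first by case: k.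
rewrite {1}/pedges /= => /andP[Pab Hr] ks.
case: k ks => [|k] ks //=.
exact: (IH k Hr ks).
Qed.

Lemma abs_child (a : int) : a != 0%R -> absz (child_level a) <= absz a.
Proof. by rewrite /child_level; case: ifP => H Ha; lia. Qed.

Theorem lemma3 (l : nat) (R : seq vtx) (h : nat) :
  (1 <= l)%N -> is_path l R -> (1 <= h <= l)%N ->
  (count (fun v : vtx => (absz v.1 == h) && turn_vertex R v) R <= 2)%N.
Proof.
move=> l1 /and4P[Rn0 UR allV allE] /andP[h1 hl].
pose d : vtx := (Posz 0, 0).
have props : forall k, k.+1 < size R ->
  [/\ absz (nth d R k).1 <= (absz (nth d R k.+1).1).+1,
      absz (nth d R k.+1).1 <= (absz (nth d R k).1).+1 &
      (absz (nth d R k).1 <= h -> absz (nth d R k.+1).1 <= h ->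
         blkh h (nth d R k) = blkh h (nth d R k.+1))].
  move=> k hk; apply: adj_prop => //.
  exact: (all_pedges (fun e => adjH l e.1 e.2) R d k allE hk).
have HB : forall k, k.+1 < size R -> insh h (nth d R k) -> insh h (nth d R k.+1) ->
    blkh h (nth d R k) = blkh h (nth d R k.+1).
  by move=> k hk; have [_ _ c] := props k hk; exact: c.
have HT1 : forall k, k.+1 < size R -> insh h (nth d R k) -> ~~ insh h (nth d R k.+1) ->
    toph h (nth d R k).
  move=> k hk; have [a b _] := props k hk; rewrite /insh /toph; move: a b.
  set p := absz _; set q := absz _; move=> *; lia.
have HT2 : forall k, k.+1 < size R -> ~~ insh h (nth d R k) -> insh h (nth d R k.+1) ->
    toph h (nth d R k.+1).
  move=> k hk; have [a b _] := props k hk; rewrite /insh /toph; move: a b.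
  set p := absz _; set q := absz _; move=> *; lia.
have Htop : forall x, toph h x -> insh h x.
  by move=> x; rewrite /toph /insh => /eqP ->.
have H3 : forall x y z, toph h x -> toph h y -> toph h z -> blkh h x = blkh h y ->
    blkh h y = blkh h z -> [\/ x = y, y = z | x = z].
  move=> [x1 x2] [y1 y2] [z1 z2]; rewrite /toph /blkh /= => /eqP ex /eqP ey /eqP ez.
  rewrite ex ey ez subnn /= => e1 e2.
  have : x1 = y1 \/ y1 = z1 \/ x1 = z1 by lia.
  case=> [->|[->|->]]; [apply: Or31|apply: Or32|apply: Or33]; congr pair => //; by rewrite ?e1.
rewrite leqNgt; apply/negP => c3.
case: (three _ _ _ UR c3) => x [y [z [xR yR zR /andP[/andP[Px Py] Pz] /and3P[xy yz xz]]]].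
have QiOf : forall v, v \in R -> (absz v.1 == h) && turn_vertex R v ->
    Qi _ d R (insh h) (toph h) (index v R).
  move=> v vR /andP[tv /and4P[_ v0 dg pm]].
  have isz : index v R < size R by rewrite index_mem.
  have Hn := pn_nth _ d _ UR isz; rewrite (nth_index d vR) in Hn.
  move: dg; rewrite /degR Hn.
  have chins : forall u, u \in path_nbrs R v -> insh h u.
    have chl : absz (child_level v.1) <= h.
      by move/eqP: (tv) => <-; apply: abs_child.
    by move=> u; rewrite (perm_mem pm) !inE => /orP[/eqP->|/eqP->]; rewrite /insh /=.
  move: chins; rewrite Hn.
  case E: (index v R) => [|i] //=.
    by case: ifP.
  case: ifP => //= iS chins _.
  split => //.
  - by rewrite -E nth_index //; rewrite /toph.
  - by apply: chins; rewrite !inE eqxx.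
  - by apply: chins; rewrite !inE eqxx orbT.
have nidx : forall a b, a \in R -> a != b -> index a R <> index b R.
  move=> a b aR ab e; move/negP: ab; apply; apply/eqP.
  by rewrite -(nth_index d aR) e nth_index // -index_mem -e index_mem.
apply: (key3 _ _ _ _ _ _ UR HB HT1 HT2 Htop H3 _ _ _ (QiOf x xR Px) (QiOf y yR Py) (QiOf z zR Pz)).
- exact: nidx.
- exact: nidx.
- exact: nidx.
Qed.
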